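(* Let $k$ be a field and $\mathrm{Lin}\colon(\mathrm{Cospan}(\mathrm{FinSet}),+)\to(\mathrm{Set},\times)$ the lax symmetric monoidal functor sending a finite set $N$ to the set of linear subspaces of $k^N$, a function $f\colon N\to M$ to the map $L\mapsto\{v\in k^M\mid v\circ f\in L\}$, and an opposite function $g^{\mathrm{op}}\colon N\to M$ (for $g\colon M\to N$) to $L\mapsto\{u\circ g\mid u\in L\}$. Taking the factorisation system $(\mathcal I_{\mathrm{FinSet}},\mathrm{FinSet})$ (isomorphisms, all morphisms) on $\mathrm{FinSet}$, the decorated corelation category $\mathrm{Lin}\mathrm{Corel}$ has, as morphisms $X\to Y$, exactly the linear subspaces of $k^{X+Y}\cong k^X\oplus k^Y$, composed by relational composition; hence $\mathrm{Lin}\mathrm{Corel}$ is isomorphic to the category of linear relations between the finite-dimensional spaces $k^X$.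
   Context: For $(\mathcal E,\mathcal M)$ a costable factorisation system on $\mathcal C$ and $F\colon\mathcal C;\mathcal M^{\mathrm{op}}\to\mathrm{Set}$ lax symmetric monoidal (here $\mathcal C;\mathcal M^{\mathrm{op}}=\mathrm{Cospan}(\mathrm{FinSet})$ since $\mathcal M=\mathrm{FinSet}$), $F\mathrm{Corel}$ has morphisms isomorphism classes of pairs (cospan $X\xrightarrow{i}N\xleftarrow{o}Y$ with $[i,o]\in\mathcal E$, element $s\in FN$); composition of $(X\to N\leftarrow Y,s)$ and $(Y\to M\leftarrow Z,t)$: form the pushout $N+_YM$ with maps $j_N,j_M$, factor $[j_Ni_X,j_Mo_Z]=m\circ e$ with $e\in\mathcal E$, and decorate the cospan $X\to\overline{N+_YM}\leftarrow Z$ by $F(m^{\mathrm{op}})F[j_N,j_M]\varphi_{N,M}(s,t)$, where $m^{\mathrm{op}}=(\xrightarrow{1}\xleftarrow{m})$. The coherence map $\varphi_{N,M}$ of $\mathrm{Lin}$ sends $(L,L')$ to $L\oplus L'\subseteq k^{N+M}$. *)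

(* Defs.v *)
From HB Require Import structures.
From mathcomp Require Import all_boot all_order all_algebra.
Set Implicit Arguments. Unset Strict Implicit. Unset Printing Implicit Defensive.
Import GRing.Theory.
Local Open Scope ring_scope.

Definition kpow (k : fieldType) (N : finType) := {ffun N -> k^o}.

Definition precomp (k : fieldType) (N M : finType) (f : N -> M)
  (v : kpow k M) : kpow k N := [ffun n => v (f n)].

Lemma precomp_is_linear (k : fieldType) (N M : finType) (f : N -> M) :
  linear (@precomp k N M f).
Proof. by move=> a u v; apply/ffunP=> n; rewrite !ffunE. Qed.

HB.instance Definition _ (k : fieldType) (N M : finType) (f : N -> M) :=
  GRing.isLinear.Build k (kpow k M) (kpow k N) _ (@precomp k N M f)
    (@precomp_is_linear k N M f).

Definition Lin_fun (k : fieldType) (N M : finType) (f : N -> M)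
  (L : {vspace kpow k N}) : {vspace kpow k M} :=
  (linfun (@precomp k N M f) @^-1: L)%VS.

Definition Lin_op (k : fieldType) (M N : finType) (g : M -> N)
  (L : {vspace kpow k N}) : {vspace kpow k M} :=
  (linfun (@precomp k M N g) @: L)%VS.

Definition copair (A B C : Type) (f : A -> C) (g : B -> C) (s : A + B) : C :=
  match s with inl a => f a | inr b => g b end.

Definition Lin_phi (k : fieldType) (N M : finType)
  (L : {vspace kpow k N}) (L' : {vspace kpow k M}) : {vspace kpow k (N + M)%type} :=
  (Lin_fun (@inl N M) L :&: Lin_fun (@inr N M) L')%VS.

(* A Lin-decorated corelation X -> Y for the factorisation system
   (isomorphisms, all maps): a cospan X -> N <- Y with [i,o] an isomorphism,
   decorated by a subspace of k^N. *)
Record corel (k : fieldType) (X Y : finType) := Corel {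
  apex : finType;
  cin : X -> apex;
  cout : Y -> apex;
  cE : bijective (copair cin cout);
  cdec : {vspace kpow k apex}
}.

Definition corel_iso (k : fieldType) (X Y : finType) (a b : corel k X Y) : Prop :=
  exists h : apex a -> apex b,
    [/\ bijective h, h \o cin a =1 cin b, h \o cout a =1 cout b
      & Lin_fun h (cdec a) = cdec b].

Definition corel_rel (k : fieldType) (X Y : finType) (a : corel k X Y)
  : {vspace kpow k (X + Y)%type} :=
  Lin_op (copair (cin a) (cout a)) (cdec a).

Definition is_pushout (Y N M P : finType) (o : Y -> N) (i : Y -> M)
  (jN : N -> P) (jM : M -> P) : Prop :=
  jN \o o =1 jM \o i /\
  forall (Q : finType) (f : N -> Q) (g : M -> Q), f \o o =1 g \o i ->
    exists h : P -> Q, [/\ h \o jN =1 f, h \o jM =1 g &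
      forall h' : P -> Q, h' \o jN =1 f -> h' \o jM =1 g -> h' =1 h].

Lemma copair_inl_inr_bij (X Z : finType) :
  bijective (copair (@inl X Z) (@inr X Z)).
Proof. by exists id; case. Qed.

(* Composite of decorated corelations (formula of the paper): the
   factorisation of [jN i_X, jM o_Z] : X+Z -> P is m \o e with e = id (an iso)
   and m = [jN i_X, jM o_Z]; decoration F(m^op) F[jN,jM] phi(s,t). *)
Definition corel_comp (k : fieldType) (X Y Z : finType)
  (a : corel k X Y) (b : corel k Y Z) (P : finType)
  (jN : apex a -> P) (jM : apex b -> P) : corel k X Z :=
  @Corel k X Z (X + Z)%type (@inl X Z) (@inr X Z) (copair_inl_inr_bij X Z)
    (Lin_op (copair (jN \o cin a) (jM \o cout b))
       (Lin_fun (copair jN jM) (Lin_phi (cdec a) (cdec b)))).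

Arguments corel_comp {k X Y Z} a b {P} jN jM.

Lemma copair_id_bij (X : finType) : bijective (copair (@inl X X) (@inr X X)).
Proof. exact: copair_inl_inr_bij. Qed.

(* Identity decorated corelation: the identity cospan X -1-> X <-1- X decorated
   by F(! : 0 -> X)(unit) (unit = the whole (zero) space k^0), then factored:
   e = id_{X+X}, m = [1,1]. *)
Definition corel_id (k : fieldType) (X : finType) : corel k X X :=
  @Corel k X X (X + X)%type (@inl X X) (@inr X X) (copair_id_bij X)
    (Lin_op (copair (@id X) (@id X))
       (Lin_fun (fun v : void => match v with end) (fullv : {vspace kpow k void}))).

Definition glue (k : fieldType) (A B : finType) (u : kpow k A) (v : kpow k B)
  : kpow k (A + B)%type := [ffun s => copair u v s].

Definition lrel_comp (k : fieldType) (X Y Z : finType)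
  (S : {vspace kpow k (X + Y)%type}) (T : {vspace kpow k (Y + Z)%type})
  (w : kpow k (X + Z)%type) : Prop :=
  exists y : kpow k Y,
    glue [ffun x => w (inl x)] y \in S /\ glue y [ffun z => w (inr z)] \in T.

Definition lrel_id (k : fieldType) (X : finType) (w : kpow k (X + X)%type) : Prop :=
  forall x : X, w (inl x) = w (inr x).

(* Main.v *)
Require Import Defs.
From HB Require Import structures.
From mathcomp Require Import all_boot all_order all_algebra.
Set Implicit Arguments. Unset Strict Implicit. Unset Printing Implicit Defensive.
Import GRing.Theory.
Local Open Scope ring_scope.

Lemma mem_Lin_op (k : fieldType) (M N : finType) (g : M -> N)
  (L : {vspace kpow k N}) w :
  (w \in Lin_op g L) <-> exists2 u, u \in L & w = precomp g u.
Proof.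
rewrite /Lin_op; split.
  by move/memv_imgP=> [u uL ->]; exists u => //; rewrite lfunE.
by move=> [u uL ->]; apply/memv_imgP; exists u => //; rewrite lfunE.
Qed.

Lemma mem_Lin_fun (k : fieldType) (N M : finType) (f : N -> M)
  (L : {vspace kpow k N}) v :
  (v \in Lin_fun f L) = (precomp f v \in L).
Proof. by rewrite /Lin_fun -memv_preim lfunE. Qed.

Lemma precomp_comp (k : fieldType) (A B C : finType) (f : A -> B) (g : B -> C)
  (v : kpow k C) : precomp f (precomp g v) = precomp (g \o f) v.
Proof. by apply/ffunP=> x; rewrite !ffunE. Qed.

Lemma precomp_ext (k : fieldType) (A B : finType) (f g : A -> B) (v : kpow k B) :
  f =1 g -> precomp f v = precomp g v.
Proof. by move=> fg; apply/ffunP=> x; rewrite !ffunE fg. Qed.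

Lemma precomp_id (k : fieldType) (A : finType) (f : A -> A) (v : kpow k A) :
  f =1 id -> precomp f v = v.
Proof. by move=> fg; apply/ffunP=> x; rewrite !ffunE fg. Qed.

Lemma copair_inl_inr (A B : Type) : copair (@inl A B) (@inr A B) =1 id.
Proof. by case. Qed.

Lemma Lin_op_id (k : fieldType) (A : finType) (f : A -> A) (L : {vspace kpow k A}) :
  f =1 id -> Lin_op f L = L.
Proof.
move=> fid; apply/vspaceP=> w; apply/idP/idP.
  by move/mem_Lin_op=> [u uL ->]; rewrite precomp_id.
by move=> wL; apply/mem_Lin_op; exists w => //; rewrite precomp_id.
Qed.

Lemma part1 (k : fieldType) (X Y : finType) (a b : corel k X Y) :
  corel_iso a b -> corel_rel a = corel_rel b.
Proof.
move=> [h [[hi hK hiK] hin hout hdec]].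
have hc : forall q, h (copair (cin a) (cout a) q) = copair (cin b) (cout b) q.
  by case=> x /=; [apply: hin|apply: hout].
apply/vspaceP=> w; apply/idP/idP; rewrite /corel_rel.
- move/mem_Lin_op=> [u uL ->]; apply/mem_Lin_op; exists (precomp hi u).
    by rewrite -hdec mem_Lin_fun precomp_comp precomp_id.
  by rewrite precomp_comp; apply: precomp_ext => q /=; rewrite -hc hK.
- move/mem_Lin_op=> [u uL ->]; apply/mem_Lin_op; exists (precomp h u).
    by rewrite -mem_Lin_fun hdec.
  by rewrite precomp_comp; apply: precomp_ext => q /=; rewrite hc.
Qed.

Lemma part2 (k : fieldType) (X Y : finType) (a b : corel k X Y) :
  corel_rel a = corel_rel b -> corel_iso a b.
Proof.
move=> E.
case: (cE a) => ia aK aiK; case: (cE b) => ib bK biK.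
set ca := copair (cin a) (cout a) in aK aiK E *.
set cb := copair (cin b) (cout b) in bK biK E *.
have hc : forall q, cb (ia (ca q)) = cb q by move=> q; rewrite aK.
exists (cb \o ia); split.
- exists (ca \o ib) => p /=; first by rewrite bK aiK.
  by rewrite aK biK.
- by move=> x /=; rewrite (hc (inl x)).
- by move=> x /=; rewrite (hc (inr x)).
apply/vspaceP=> v; rewrite mem_Lin_fun; apply/idP/idP.
- move=> Hv.
  have : precomp ca (precomp (cb \o ia) v) \in corel_rel a.
    by apply/mem_Lin_op; exists (precomp (cb \o ia) v).
  rewrite E => /mem_Lin_op [u uL].
  rewrite precomp_comp (precomp_ext _ (f := (cb \o ia) \o ca) (g := cb)); last first.
    by move=> q /=; rewrite aK.
  move=> Hu.
  suff -> : v = u by [].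
  apply/ffunP=> p; have := congr1 (fun f : kpow k _ => f (ib p)) Hu.
  by rewrite !ffunE /cb in biK *; rewrite biK => ->.
- move=> Hv.
  have : precomp cb v \in corel_rel a by rewrite E; apply/mem_Lin_op; exists v.
  move/mem_Lin_op=> [u uL Hu].
  suff -> : precomp (cb \o ia) v = u by [].
  apply/ffunP=> p; have := congr1 (fun f : kpow k _ => f (ia p)) Hu.
  by rewrite !ffunE /ca in aiK *; rewrite aiK => ->.
Qed.

Lemma part3 (k : fieldType) (X Y : finType) (S : {vspace kpow k (X + Y)%type}) :
  exists a : corel k X Y, corel_rel a = S.
Proof.
exists (@Corel k X Y (X + Y)%type (@inl X Y) (@inr X Y) (copair_inl_inr_bij X Y) S).
by rewrite /corel_rel /= Lin_op_id //; apply: copair_inl_inr.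
Qed.

Lemma part5 (k : fieldType) (X : finType) (w : kpow k (X + X)%type) :
  w \in corel_rel (corel_id k X) <-> lrel_id w.
Proof.
rewrite /corel_rel /corel_id /= Lin_op_id; last exact: copair_inl_inr.
split.
- by move/mem_Lin_op=> [u _ ->] x; rewrite !ffunE.
- move=> H; apply/mem_Lin_op; exists [ffun x => w (inl x)].
    by rewrite mem_Lin_fun memvf.
  by apply/ffunP=> -[x|x]; rewrite !ffunE //= H.
Qed.

Lemma mem_Lin_phi (k : fieldType) (N M : finType) (L : {vspace kpow k N})
  (L' : {vspace kpow k M}) v :
  (v \in Lin_phi L L') = (precomp inl v \in L) && (precomp inr v \in L').
Proof. by rewrite /Lin_phi memv_cap !mem_Lin_fun. Qed.

Lemma insub_val (T : choiceType) (l : seq T) (x0 x : T) :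
  x \in l -> odflt x0 (omap val (insub x : option (seq_sub l))) = x.
Proof. by move=> xl; case: insubP => [/= u' _ ->|]; rewrite ?xl. Qed.

Lemma part4 (k : fieldType) (X Y Z : finType) (a : corel k X Y) (b : corel k Y Z)
          (P : finType) (jN : apex a -> P) (jM : apex b -> P) :
      is_pushout (cout a) (cin b) jN jM ->
      forall w : kpow k (X + Z)%type,
        w \in corel_rel (corel_comp a b jN jM) <->
        lrel_comp (corel_rel a) (corel_rel b) w.
Proof.
move=> [Hcomm Huniv] w.
rewrite /corel_rel /corel_comp /= Lin_op_id; last exact: copair_inl_inr.
split.
- move/mem_Lin_op=> [u]; rewrite mem_Lin_fun mem_Lin_phi => /andP[Ha Hb] ->.
  exists (precomp (jN \o cout a) u); split; apply/mem_Lin_op.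
  + exists (precomp jN u).
      by rewrite precomp_comp in Ha; exact: Ha.
    by apply/ffunP=> -[x|x]; rewrite !ffunE /= ?ffunE.
  + exists (precomp jM u).
      by rewrite precomp_comp in Hb; exact: Hb.
    apply/ffunP=> -[x|x]; rewrite !ffunE /= ?ffunE /=; last by []. exact: congr1 _ (Hcomm x).
- move=> [y [/mem_Lin_op [s sL Hs] /mem_Lin_op [t tL Ht]]].
  pose l : seq k := [seq s n | n <- enum (apex a)] ++ [seq t m | m <- enum (apex b)].
  have sl : forall n, s n \in l.
    by move=> n; rewrite mem_cat map_f ?mem_enum.
  have tl : forall m, t m \in l.
    by move=> m; rewrite mem_cat orbC map_f ?mem_enum.
  have st : forall y0, s (cout a y0) = t (cin b y0).
    move=> y0.
    have := congr1 (fun f : kpow k _ => f (inr y0)) Hs.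
    have := congr1 (fun f : kpow k _ => f (inl y0)) Ht.
    by rewrite !ffunE /= => <- <-.
  have [h [hN hM _]] := Huniv (option (seq_sub l) : finType)
    (fun n => insub (s n)) (fun m => insub (t m))
    (fun y0 => congr1 _ (st y0)).
  pose u : kpow k P := [ffun p => odflt 0 (omap val (h p))].
  have uN : forall n, u (jN n) = s n.
    by move=> n; rewrite ffunE; have /= -> := hN n; rewrite insub_val.
  have uM : forall m, u (jM m) = t m.
    by move=> m; rewrite ffunE; have /= -> := hM m; rewrite insub_val.
  apply/mem_Lin_op; exists u.
    rewrite mem_Lin_fun mem_Lin_phi; apply/andP; split.
      suff -> : precomp inl (precomp (copair jN jM) u) = s by [].
      by apply/ffunP=> n; rewrite !ffunE /=; move: (uN n); rewrite ffunE.
    suff -> : precomp inr (precomp (copair jN jM) u) = t by [].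
    by apply/ffunP=> n; rewrite !ffunE /=; move: (uM n); rewrite ffunE.
  apply/ffunP=> -[x|x]; rewrite !ffunE /=.
    move: (uN (cin a x)); rewrite ffunE => ->; have := congr1 (fun f : kpow k _ => f (inl x)) Hs.
    by rewrite !ffunE /= ffunE.
  move: (uM (cout b x)); rewrite ffunE => ->; have := congr1 (fun f : kpow k _ => f (inr x)) Ht.
  by rewrite !ffunE /= ffunE.
Qed.

Theorem mainTheorem15 (k : fieldType) :
  (* well defined on isomorphism classes *)
  (forall (X Y : finType) (a b : corel k X Y),
      corel_iso a b -> corel_rel a = corel_rel b) /\
  (* injective on isomorphism classes *)
  (forall (X Y : finType) (a b : corel k X Y),
      corel_rel a = corel_rel b -> corel_iso a b) /\
  (* surjective onto subspaces of k^(X+Y) *)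
  (forall (X Y : finType) (S : {vspace kpow k (X + Y)%type}),
      exists a : corel k X Y, corel_rel a = S) /\
  (* composition is relational composition *)
  (forall (X Y Z : finType) (a : corel k X Y) (b : corel k Y Z)
          (P : finType) (jN : apex a -> P) (jM : apex b -> P),
      is_pushout (cout a) (cin b) jN jM ->
      forall w : kpow k (X + Z)%type,
        w \in corel_rel (corel_comp a b jN jM) <->
        lrel_comp (corel_rel a) (corel_rel b) w) /\
  (* identities are diagonals *)
  (forall (X : finType) (w : kpow k (X + X)%type),
      w \in corel_rel (corel_id k X) <-> lrel_id w).
Proof.
split; first exact: part1.
split; first exact: part2.
split; first exact: part3.
split; first exact: part4.
exact: part5.
Qed.
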